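(* Let $q=(V_q,E_q,L_q)$ and $H=(V_H,E_H,L_H)$ be hypergraphs, let $E'\subseteq E_q$ be non-empty with partial query $q'=(\bigcup_{e\in E'}e,E',L_q)$, and let $M:E'\to E_H$ be any map. Then $M$ is a partial embedding of $q'$ in $H$ if and only if for every non-empty subset $S\subseteq E'$ we have $Sig(\mathrm{Cell}_q(S))=Sig(\mathrm{Cell}_H^M(S))$.
   Context: A (vertex-labeled) hypergraph is a triple $H=(V,E,L)$ where $V$ is a finite set, $E$ is a set of non-empty subsets of $V$ (hyperedges, no repeated hyperedges) with $\bigcup_{e\in E}e=V$, and $L:V\to\Sigma$ assigns each vertex a label. For $S\subseteq V$, $Sig(S)$ is the multiset of labels $\{L(v)\mid v\in S\}$. For $E'\subseteq E_q$, the partial query is $q'=(\bigcup_{e\in E'}e,E',L_q)$; a map $M:E'\to E_H$ is a partial embedding if there exists an injective label-preserving $\phi:\bigcup_{e\in E'}e\to V_H$ with $\{\phi(u):u\in e\}=M(e)$ for all $e\in E'$. Cells: for non-empty $S\subseteq E'$, $\mathrm{Cell}_q(S)=\{u\in\bigcup_{e\in E'}e : \{e\in E': u\in e\}=S\}$ (vertices lying in all hyperedges of $S$ and in no hyperedge of $E'\setminus S$), and $\mathrm{Cell}^M_H(S)=\{v\in\bigcup_{e\in E'}M(e) : \{e\in E': v\in M(e)\}=S\}$ (the corresponding cell of the image hyperedges $M(S)$). *)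

(* Defs.v *)
From mathcomp Require Import all_boot.
Set Implicit Arguments. Unset Strict Implicit. Unset Printing Implicit Defensive.

(* A vertex-labeled hypergraph with vertex set the finite type V
   (the covering condition makes V exactly the union of the hyperedges). *)
Record hypergraph (V : finType) (Sigma : Type) := Hypergraph {
  hedges : {set {set V}};
  hlab : V -> Sigma;
  hedges_nonempty : forall e, e \in hedges -> e != set0;
  hedges_cover : \bigcup_(e in hedges) e = [set: V]
}.

(* Sig(S): the multiset of labels of S, represented as a sequence;
   multiset equality is perm_eq. *)
Definition Sig (V : finType) (Sigma : Type) (L : V -> Sigma) (S : {set V}) : seq Sigma :=
  [seq L v | v <- enum S].

Definition sig_eq (Sigma : eqType) (s1 s2 : seq Sigma) : Prop := perm_eq s1 s2.

Definition pverts (V : finType) (E' : {set {set V}}) : {set V} :=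
  \bigcup_(e in E') e.

Definition partial_embedding (Vq VH : finType) (Sigma : Type)
  (q : hypergraph Vq Sigma) (H : hypergraph VH Sigma)
  (E' : {set {set Vq}}) (M : {set Vq} -> {set VH}) : Prop :=
  exists phi : Vq -> VH,
    [/\ {in pverts E' &, injective phi},
        {in pverts E', forall u, hlab H (phi u) = hlab q u} &
        forall e, e \in E' -> phi @: e = M e].

Definition cell_q (Vq : finType) (E' S : {set {set Vq}}) : {set Vq} :=
  [set u in pverts E' | [set e in E' | u \in e] == S].

Definition cell_H (Vq VH : finType) (E' S : {set {set Vq}})
  (M : {set Vq} -> {set VH}) : {set VH} :=
  [set v in \bigcup_(e in E') M e | [set e in E' | v \in M e] == S].

(* Main.v *)
Require Import Defs.
From mathcomp Require Import all_boot.
Set Implicit Arguments. Unset Strict Implicit.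

Lemma uniq_map_inj_in (T1 T2 : eqType) (h : T1 -> T2) (s : seq T1) :
  uniq (map h s) -> {in s &, injective h}.
Proof.
elim: s => [|x s IH] //= /andP[hx us] z w.
rewrite !in_cons => /orP[/eqP->|zs] /orP[/eqP->|ws] // E.
- by move: hx; rewrite E map_f.
- by move: hx; rewrite -E map_f.
- exact: IH.
Qed.

Lemma seq_match (T1 T2 S : eqType) (f : T1 -> S) (g : T2 -> S) (y0 : T2)
  (s : seq T1) (t : seq T2) :
  uniq s -> perm_eq (map f s) (map g t) ->
  exists h : T1 -> T2, perm_eq (map h s) t /\ {in s, forall x, g (h x) = f x}.
Proof.
elim: s t => [|x s IH] t us pe.
  exists (fun _ => y0); split => //.
  by move: pe; rewrite perm_sym => /perm_nilP; case: t.
have : f x \in map g t by rewrite -(perm_mem pe) mem_head.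
case/mapP => y yt gy.
have pe' : perm_eq (map f s) (map g (rem y t)).
  have p2 := perm_map g (perm_to_rem yt).
  have := perm_trans pe p2; by rewrite /= gy perm_cons.
move: us => /= /andP[xs us].
have [h' [ph' lh']] := IH _ us pe'.
exists (fun z => if z == x then y else h' z); split.
  rewrite /= eqxx.
  have -> : [seq (if z == x then y else h' z) | z <- s] = map h' s.
    apply/eq_in_map => z zs; case: eqP => // zx; by move: xs; rewrite -zx zs.
  apply: (@perm_trans _ (y :: rem y t)); last by rewrite perm_sym perm_to_rem.
  by rewrite perm_cons.
move=> z; rewrite in_cons; case: eqP => [->|zx] /= zs; first by rewrite gy.
exact: lh'.
Qed.
From Stdlib Require Import ClassicalEpsilon.

Lemma set_match (T1 T2 : finType) (S : eqType) (f : T1 -> S) (g : T2 -> S) (y0 : T2)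
  (A : {set T1}) (B : {set T2}) :
  perm_eq (Sig f A) (Sig g B) ->
  exists h : T1 -> T2, [/\ {in A &, injective h}, h @: A = B &
     {in A, forall x, g (h x) = f x}].
Proof.
move=> pe; have [h [ph lh]] := seq_match y0 (enum_uniq (mem A)) pe.
exists h; split.
- move=> x z xA zA; apply: (uniq_map_inj_in (s := enum A)); rewrite ?mem_enum //.
  by rewrite (perm_uniq ph) enum_uniq.
- apply/setP => v; transitivity (v \in enum B); last by rewrite mem_enum.
  rewrite -(perm_mem ph).
  apply/imsetP/mapP => [[x xA ->]|[x xA ->]]; exists x => //; by rewrite ?mem_enum in xA *.
- by move=> x xA; apply: lh; rewrite mem_enum.
Qed.

Lemma enum_imset_perm (T1 T2 : finType) (h : T1 -> T2) (A : {set T1}) :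
  {in A &, injective h} -> perm_eq (enum (h @: A)) (map h (enum A)).
Proof.
move=> inj; apply: uniq_perm; rewrite ?enum_uniq ?map_inj_in_uniq ?enum_uniq //.
- by move=> x y; rewrite !mem_enum; apply: inj.
move=> v; rewrite mem_enum; apply/imsetP/mapP => [[x xA ->]|[x xA ->]];
  exists x => //; by rewrite ?mem_enum in xA *.
Qed.

Theorem theorem3 (Vq VH : finType) (Sigma : eqType)
  (q : hypergraph Vq Sigma) (H : hypergraph VH Sigma)
  (E' : {set {set Vq}}) (M : {set Vq} -> {set VH}) :
  E' \subset hedges q -> E' != set0 ->
  (forall e, e \in E' -> M e \in hedges H) ->
  (partial_embedding q H E' M <->
   forall S : {set {set Vq}}, S \subset E' -> S != set0 ->
     sig_eq (Sig (hlab q) (cell_q E' S)) (Sig (hlab H) (cell_H E' S M))).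
Proof.
move=> sEq nE' MH; split.
- case=> phi [inj lab img] S sS nS.
  have key : forall u e, u \in pverts E' -> e \in E' -> (phi u \in M e) = (u \in e).
    move=> u e uP eE; rewrite -(img e eE); apply/imsetP/idP => [[w we E]|ue].
      rewrite (inj u w uP) //; apply/bigcupP; by exists e.
    by exists u.
  have -> : cell_H E' S M = phi @: cell_q E' S.
    apply/setP => v; rewrite inE; apply/andP/imsetP.
      case=> /bigcupP[e eE]; rewrite -(img e eE) => /imsetP[u ue ->] cS.
      have uP : u \in pverts E' by apply/bigcupP; exists e.
      exists u => //; rewrite inE uP /=; move: cS.
      by have -> // : [set e0 in E' | phi u \in M e0] = [set e0 in E' | u \in e0];
        apply/setP => e0; rewrite !inE; case e0E: (e0 \in E') => //=; rewrite key.
    case=> u; rewrite inE => /andP[uP cS] ->; split.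
      move: (uP) => /bigcupP[e eE ue]; apply/bigcupP; exists e => //; by rewrite key.
    by have -> // : [set e0 in E' | phi u \in M e0] = [set e0 in E' | u \in e0];
      apply/setP => e0; rewrite !inE; case e0E: (e0 \in E') => //=; rewrite key.
  rewrite /sig_eq /Sig.
  have iC : {in cell_q E' S &, injective phi}.
    by move=> x y; rewrite !inE => /andP[xP _] /andP[yP _]; apply: inj.
  apply: (@perm_trans _ [seq hlab H v | v <- map phi (enum (cell_q E' S))]);
    last by rewrite perm_sym; apply: perm_map; apply: enum_imset_perm.
  suff -> : [seq hlab H v | v <- map phi (enum (cell_q E' S))] = [seq hlab q v | v <- enum (cell_q E' S)] by [].
  rewrite -map_comp; apply/eq_in_map => x; rewrite mem_enum inE => /andP[xP _] /=.
  by rewrite lab.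
- move=> hyp.
  have [e0 e0E] := set0Pn _ nE'.
  have [y0 _] : exists y0, y0 \in M e0.
    have := hedges_nonempty (MH e0 e0E); case/set0Pn => y yM; by exists y.
  have ex : forall S : {set {set Vq}}, exists h : Vq -> VH,
      S \subset E' -> S != set0 ->
      [/\ {in cell_q E' S &, injective h}, h @: cell_q E' S = cell_H E' S M &
          {in cell_q E' S, forall x, hlab H (h x) = hlab q x}].
    move=> S; case: (boolP (S \subset E')) => sS; last by exists (fun _ => y0).
    case: (boolP (S != set0)) => nS; last by exists (fun _ => y0).
    have [h Ph] := set_match y0 (hyp S sS nS); by exists h.
  pose hS S := proj1_sig (constructive_indefinite_description _ (ex S)).
  have PhS (S : {set {set Vq}}) : S \subset E' -> S != set0 ->
      [/\ {in cell_q E' S &, injective (hS S)}, hS S @: cell_q E' S = cell_H E' S M &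
          {in cell_q E' S, forall x, hlab H (hS S x) = hlab q x}]
    := proj2_sig (constructive_indefinite_description _ (ex S)).
  pose cell u := [set e in E' | u \in e].
  have cellP u : u \in pverts E' ->
      [/\ cell u \subset E', cell u != set0 & u \in cell_q E' (cell u)].
    move=> uP; split.
    - by apply/subsetP => e; rewrite inE => /andP[].
    - case/bigcupP: uP => e eE ue; apply/set0Pn; exists e; by rewrite inE eE.
    - by rewrite inE uP /=.
  exists (fun u => hS (cell u) u); split.
  + move=> u w uP wP E.
    have [s1 n1 c1] := cellP u uP; have [s2 n2 c2] := cellP w wP.
    have [i1 im1 _] := PhS _ s1 n1; have [i2 im2 _] := PhS _ s2 n2.
    have m1 : hS (cell u) u \in cell_H E' (cell u) M by rewrite -im1; apply: imset_f.
    have m2 : hS (cell w) w \in cell_H E' (cell w) M by rewrite -im2; apply: imset_f.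
    have ecell : cell u = cell w.
      move: m1 m2; rewrite E !inE => /andP[_ /eqP e1] /andP[_ /eqP e2]; exact: (etrans (esym e1) e2).
    move: E c2; rewrite -ecell => E c2; exact: i1 c1 c2 E.
  + move=> u uP /=.
    have [s1 n1 c1] := cellP u uP; have [_ _ l1] := PhS _ s1 n1; exact: l1.
  + move=> e eE; apply/setP => v; apply/imsetP/idP.
      case=> u ue ->.
      have uP : u \in pverts E' by apply/bigcupP; exists e.
      have [s1 n1 c1] := cellP u uP; have [_ im1 _] := PhS _ s1 n1.
      have : hS (cell u) u \in cell_H E' (cell u) M by rewrite -im1; apply: imset_f.
      rewrite inE => /andP[_ /eqP ec].
      have : e \in cell u by rewrite inE eE.
      by rewrite -[in X in X -> _]ec inE => /andP[].
    move=> vM.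
    pose S := [set e' in E' | v \in M e'].
    have sS : S \subset E' by apply/subsetP => e'; rewrite inE => /andP[].
    have nS : S != set0 by apply/set0Pn; exists e; rewrite inE eE.
    have [_ im _] := PhS _ sS nS.
    have : v \in cell_H E' S M by rewrite inE eqxx andbT; apply/bigcupP; exists e.
    rewrite -im => /imsetP[u]; rewrite inE => /andP[uP /eqP cu] ->.
    exists u; last by rewrite /cell cu.
    have : e \in S by rewrite inE eE.
    by rewrite -cu inE => /andP[].
Qed.
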